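(* Let $\mathbb{F}_q$ be the finite field with $q$ elements and let $n=p^m$ be a prime power. Assume $\mathrm{char}(\mathbb{F}_q)\neq 2,3,p$. If either (1) $p=2$ and $q\equiv 1\pmod 4$, or (2) $p>2$ and $p\mid q-1$, then $\mathfrak{sl}_n(\mathbb{F}_q)$ has a COD.
   Context: $\mathfrak{sl}_n(\mathbb{F})$ denotes the Lie algebra of $n\times n$ traceless matrices over $\mathbb{F}$. A Cartan subalgebra is a nilpotent self-normalizing subalgebra. A classical Cartan subalgebra of $\mathfrak{L}=\mathfrak{sl}_n(\mathbb{F})$ (with $\ell=\mathrm{char}\,\mathbb{F}$) is an abelian Cartan subalgebra $H$ such that: (a) $\mathfrak{L}=\bigoplus_\alpha \mathfrak{L}_\alpha$ with $\mathfrak{L}_\alpha=\{x: [x,h]=\alpha(h)x\ \forall h\in H\}$ over linear functionals $\alpha$ on $H$ (roots); (b) for each root $\alpha\ne0$, $[\mathfrak{L}_\alpha,\mathfrak{L}_{-\alpha}]$ is one-dimensional; (c) for roots $\alpha,\beta$ with $\beta\neq0$, not all $\alpha+k\beta$ ($1\le k\le \ell-1$) are roots. The Killing form is $K(A,B)=2n\,\mathrm{Tr}(AB)$. A COD of $\mathfrak{sl}_n(\mathbb{F})$ is a vector space decomposition $\mathfrak{sl}_n(\mathbb{F})=H_0\oplus\cdots\oplus H_n$ into classical Cartan subalgebras that are pairwise orthogonal with respect to $K$. *)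

(* Defs.v *)
From HB Require Import structures.
From mathcomp Require Import all_boot all_order all_algebra.
Unset Printing Implicit Defensive.
Import Order.TTheory GRing.Theory.
Local Open Scope ring_scope.

Section LieDefs.
Variables (F : finFieldType) (n : nat).
Local Notation M := 'M[F]_n.

Definition lbr (x y : M) : M := x *m y - y *m x.

Definition sl : {vspace M} := span (enum [pred x : M | \tr x == 0]).

Definition brsp (A B : {vspace M}) : {vspace M} :=
  span [seq lbr ab.1 ab.2 | ab <- enum [pred ab : M * M | (ab.1 \in A) && (ab.2 \in B)]].

Definition is_subalg (H : {vspace M}) : Prop :=
  (H <= sl)%VS /\ forall x y, x \in H -> y \in H -> lbr x y \in H.

Definition lie_nilpotent (H : {vspace M}) : Prop :=
  exists k : nat, iter k (brsp H) H = 0%VS.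

Definition self_normalizing (H : {vspace M}) : Prop :=
  forall x, x \in sl -> (forall h, h \in H -> lbr x h \in H) -> x \in H.

Definition cartan (H : {vspace M}) : Prop :=
  [/\ is_subalg H, lie_nilpotent H & self_normalizing H].

Definition lie_abelian (H : {vspace M}) : Prop :=
  forall x y, x \in H -> y \in H -> lbr x y = 0.

(* Linear functionals on H are represented by their values on the basis
   vbasis H, i.e. by row vectors a : 'rV_(\dim H); this is a bijection
   with the dual space of H. *)
Definition fval (H : {vspace M}) (a : 'rV[F]_(\dim H)) (h : M) : F :=
  \sum_(i < \dim H) a 0 i * coord (vbasis H) i h.

Definition rootsp (H : {vspace M}) (a : 'rV[F]_(\dim H)) : {vspace M} :=
  span (enum [pred x : M | (x \in sl) &&
        [forall h : M, (h \in H) ==> (lbr x h == fval H a h *: x)]]).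

Definition is_root (H : {vspace M}) (a : 'rV[F]_(\dim H)) : bool :=
  rootsp H a != 0%VS.

Definition classical_cartan (H : {vspace M}) : Prop :=
  [/\ cartan H, lie_abelian H,
      sl = (\sum_(a : 'rV[F]_(\dim H)) rootsp H a)%VS
        /\ directv (\sum_(a : 'rV[F]_(\dim H)) rootsp H a)%VS,
      (forall a, is_root H a -> a != 0 -> \dim (brsp (rootsp H a) (rootsp H (- a))) = 1%N)
    &
      (forall (l : nat) a b, l \in [pchar F] -> is_root H a -> is_root H b -> b != 0 ->
         ~ (forall k : nat, (1 <= k <= l.-1)%N -> is_root H (a + k%:R *: b)))].

Definition killing (A B : M) : F := (2 * n)%:R * \tr (A *m B).

Definition has_COD : Prop :=
  exists H : 'I_n.+1 -> {vspace M},
    [/\ sl = (\sum_i H i)%VS, directv (\sum_i H i)%VS,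
        (forall i, classical_cartan (H i))
      & forall i j, i != j -> forall x y, x \in H i -> y \in H j -> killing x y = 0].

End LieDefs.

(* Main.v *)
Require Import Defs.
From HB Require Import structures.
From mathcomp Require Import all_boot all_order all_algebra all_fingroup all_solvable all_field.
From mathcomp Require Import zify ring.
Set Implicit Arguments. Unset Strict Implicit. Unset Printing Implicit Defensive.
Import Order.TTheory GRing.Theory.
Local Open Scope ring_scope.
Section Gen.
Variables (F : finFieldType) (n : nat).
Local Notation M := 'M[F]_n.
Implicit Types (H : {vspace M}).
Local Notation fval := (fval F n).
Local Notation lbr := (lbr F n).
Local Notation rootsp := (rootsp F n).
Local Notation sl := (sl F n).

Lemma mem_span_pred (S : pred M) : S 0 ->
  (forall c x y, S x -> S y -> S (c *: x + y)) ->
  forall x, (x \in span (enum S)) = S x.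
Proof.
move=> S0 Scl x; apply/idP/idP; last first.
  by move=> Sx; apply: memv_span; rewrite mem_enum.
have -> : span (enum S) = span (in_tuple (enum S)) by [].
move/coord_span ->.
elim/big_ind: _ => //.
  by move=> u v Su Sv; rewrite -[u]scale1r; apply: Scl.
move=> i _; rewrite -[_ *: _]addr0; apply: Scl => //.
have : (in_tuple (enum S))`_i \in enum S by apply: mem_nth (ltn_ord i).
by rewrite mem_enum.
Qed.

Lemma mem_sl x : (x \in sl) = (\tr x == 0).
Proof.
rewrite /Defs.sl mem_span_pred //= ?mxtrace0 // => c u v /eqP hu /eqP hv.
by rewrite mxtraceD mxtraceZ hu hv mulr0 addr0.
Qed.

Lemma fval_lin H (a : 'rV_(\dim H)) (c : F) u v : fval H a (c *: u + v) = c * fval H a u + fval H a v.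
Proof.
rewrite /Defs.fval mulr_sumr -big_split; apply: eq_bigr => i _.
by rewrite linearP /= mulrDr mulrCA.
Qed.

Lemma fval0 H (h : M) : fval H 0 h = 0.
Proof. by rewrite /Defs.fval big1 // => i _; rewrite mxE mul0r. Qed.

Lemma fvalDZ H (a b : 'rV_(\dim H)) (k : F) (h : M) : fval H (a + k *: b) h = fval H a h + k * fval H b h.
Proof.
rewrite /Defs.fval mulr_sumr -big_split; apply: eq_bigr => i _.
by rewrite !mxE mulrDl mulrA.
Qed.

Lemma fvalN H (a : 'rV_(\dim H)) (h : M) : fval H (- a) h = - fval H a h.
Proof.
rewrite /Defs.fval -sumrN; apply: eq_bigr => i _.
by rewrite !mxE mulNr.
Qed.

Lemma mem_rootsp H (a : 'rV_(\dim H)) (x : M) : (x \in rootsp H a) =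
  (x \in sl) && [forall h : M, (h \in H) ==> (lbr x h == fval H a h *: x)].
Proof.
rewrite /Defs.rootsp mem_span_pred //=.
  by rewrite mem0v; apply/forallP => h; apply/implyP => _; rewrite /Defs.lbr !mul0mx mulmx0 subr0 scaler0.
move=> c u v /andP[su /forallP hu] /andP[sv /forallP hv].
rewrite memvD ?memvZ //; apply/forallP => h; apply/implyP => hH.
move: (hu h) (hv h); rewrite hH /= => /eqP eu /eqP ev.
move: eu ev; rewrite /Defs.lbr => eu ev.
rewrite mulmxDl mulmxDr -!scalemxAl -!scalemxAr.
rewrite opprD addrACA -!scalerBr eu ev scalerDr !scalerA mulrC //.
Qed.

Lemma fval_rep (H : {vspace M}) (f : M -> F) :
  (forall c x y, f (c *: x + y) = c * f x + f y) ->
  forall h, h \in H -> fval H (\row_i f (vbasis H)`_i) h = f h.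
Proof.
move=> flin h hH.
have f0 : f 0 = 0.
  have := flin 1 0 0; rewrite scale1r addr0 mul1r.
  move/(congr1 (fun t => t - f 0)); rewrite addrK subrr.
  by move=> e; rewrite -e.
have fD : {morph f : x y / x + y}.
  by move=> x y; rewrite -[x in LHS]scale1r flin mul1r.
rewrite [in RHS](coord_vbasis hH) (big_morph f fD f0) /fval.
apply: eq_bigr => i _; rewrite mxE -[_ *: _]addr0 flin f0 addr0 mulrC //.
Qed.

Lemma fval_basis (H : {vspace M}) (a : 'rV_(\dim H)) (j : 'I_(\dim H)) :
  fval H a (vbasis H)`_j = a 0 j.
Proof.
rewrite /Defs.fval (bigD1 j) //= coord_free ?eqxx ?mulr1; last by case/andP: (vbasisP H).
rewrite big1 ?addr0 // => i /negPf ij; rewrite coord_free; last by case/andP: (vbasisP H).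
by rewrite eq_sym ij mulr0.
Qed.

Lemma fval_inj (H : {vspace M}) (a b : 'rV_(\dim H)) :
  (forall h, h \in H -> fval H a h = fval H b h) -> a = b.
Proof.
move=> E; apply/rowP => j; rewrite -!fval_basis; apply: E.
by apply: vbasis_mem; apply: mem_nth; rewrite size_tuple ltn_ord.
Qed.

End Gen.
Section Frame.
Variables (F : finFieldType) (n : nat).
Local Notation M := 'M[F]_n.
Local Notation fval := (fval F n).
Local Notation lbr := (lbr F n).
Local Notation rootsp := (rootsp F n).
Local Notation sl := (sl F n).
Variables (P Q : M).
Hypothesis QP : Q *m P = 1%:M.
Let PQ : P *m Q = 1%:M. Proof. exact: mulmx1C. Qed.

Definition phi (x : M) := P *m x *m Q.
Definition psi (x : M) := Q *m x *m P.

Lemma psiK x : psi (phi x) = x.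
Proof. by rewrite /psi /phi !mulmxA QP mul1mx -mulmxA QP mulmx1. Qed.
Lemma phiK x : phi (psi x) = x.
Proof. by rewrite /psi /phi !mulmxA PQ mul1mx -mulmxA PQ mulmx1. Qed.
Lemma psi_inj : injective psi. Proof. exact: can_inj phiK. Qed.
Lemma psiM x y : psi (x *m y) = psi x *m psi y.
Proof. by rewrite /psi !mulmxA -[Q *m x *m P *m Q]mulmxA PQ mulmx1. Qed.
Lemma phiM x y : phi (x *m y) = phi x *m phi y.
Proof. by rewrite /phi !mulmxA -[P *m x *m Q *m P]mulmxA QP mulmx1. Qed.
Lemma psiD x y : psi (x + y) = psi x + psi y.
Proof. by rewrite /psi mulmxDr mulmxDl. Qed.
Lemma psiZ c x : psi (c *: x) = c *: psi x.
Proof. by rewrite /psi -scalemxAr -scalemxAl. Qed.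
Lemma phiD x y : phi (x + y) = phi x + phi y.
Proof. by rewrite /phi mulmxDr mulmxDl. Qed.
Lemma phiZ c x : phi (c *: x) = c *: phi x.
Proof. by rewrite /phi -scalemxAr -scalemxAl. Qed.
Lemma psi0 : psi 0 = 0. Proof. by rewrite /psi mulmx0 mul0mx. Qed.
Lemma phi0 : phi 0 = 0. Proof. by rewrite /phi mulmx0 mul0mx. Qed.
Lemma psiN x : psi (- x) = - psi x.
Proof. by rewrite -scaleN1r psiZ scaleN1r. Qed.
Lemma phiN x : phi (- x) = - phi x.
Proof. by rewrite -scaleN1r phiZ scaleN1r. Qed.
Lemma psiB x y : psi (x - y) = psi x - psi y.
Proof. by rewrite psiD psiN. Qed.
Lemma phiB x y : phi (x - y) = phi x - phi y.
Proof. by rewrite phiD phiN. Qed.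
Lemma psi_sum I r (p : pred I) (f : I -> M) :
  psi (\sum_(i <- r | p i) f i) = \sum_(i <- r | p i) psi (f i).
Proof. exact: (big_morph psi psiD psi0). Qed.
Lemma phi_sum I r (p : pred I) (f : I -> M) :
  phi (\sum_(i <- r | p i) f i) = \sum_(i <- r | p i) phi (f i).
Proof. exact: (big_morph phi phiD phi0). Qed.
Lemma psi_lbr x y : psi (lbr x y) = lbr (psi x) (psi y).
Proof. by rewrite /Defs.lbr psiB !psiM. Qed.
Lemma tr_psi x : \tr (psi x) = \tr x.
Proof. by rewrite /psi mxtrace_mulC mulmxA PQ mul1mx. Qed.
Lemma tr_phi x : \tr (phi x) = \tr x.
Proof. by rewrite -[in RHS](psiK x) tr_psi. Qed.

Definition Hpred : pred M := fun x => (\tr x == 0) && is_diag_mx (psi x).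
Definition Hf : {vspace M} := span (enum Hpred).

Lemma diag_lin c (A B : M) : is_diag_mx A -> is_diag_mx B -> is_diag_mx (c *: A + B).
Proof.
move=> /is_diag_mxP hA /is_diag_mxP hB; apply/is_diag_mxP => i j ij.
by rewrite !mxE hA // hB // mulr0 addr0.
Qed.

Lemma mem_Hf x : (x \in Hf) = (\tr x == 0) && is_diag_mx (psi x).
Proof.
rewrite /Hf mem_span_pred //.
  by rewrite /Hpred mxtrace0 eqxx psi0 mx0_is_diag.
move=> c u v /andP[/eqP tu du] /andP[/eqP tv dv]; apply/andP; split.
  by rewrite mxtraceD mxtraceZ tu tv mulr0 addr0.
by rewrite psiD psiZ diag_lin.
Qed.

Lemma diagE (A : M) : is_diag_mx A -> A = diag_mx (\row_k A k k).
Proof.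
move/is_diag_mxP => hA; apply/matrixP => i j; rewrite !mxE.
by case: (eqVneq i j) => [->|ij] //; rewrite hA // mulr0n.
Qed.

Definition E (i j : 'I_n) := phi (delta_mx i j).

Lemma psiE i j : psi (E i j) = delta_mx i j.
Proof. exact: psiK. Qed.


Lemma diag_is_diag (d : 'rV[F]_n) : is_diag_mx (diag_mx d).
Proof.
apply/is_diag_mxP=> i j ij; rewrite mxE.
have -> : (i == j) = false by apply/negP => /eqP e; move: ij; rewrite e eqxx.
by rewrite mulr0n.
Qed.

Lemma lbr_diag (y : M) (d : 'rV[F]_n) i j :
  (lbr y (diag_mx d)) i j = y i j * (d 0 j - d 0 i).
Proof.
by rewrite /Defs.lbr mul_mx_diag mul_diag_mx !mxE mulrBr [d 0 i * _]mulrC.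
Qed.

Lemma lbr_diag_row (y : M) (f : 'I_n -> F) i j :
  (lbr y (diag_mx (\row_k f k))) i j = y i j * (f j - f i).
Proof. by rewrite lbr_diag !mxE. Qed.

Lemma scal_entry c (A : M) i j : (c *: A) i j = c * A i j.
Proof. by rewrite mxE. Qed.

Lemma lbrZZ c c' (A B : M) : lbr (c *: A) (c' *: B) = (c * c') *: lbr A B.
Proof.
rewrite /Defs.lbr -!scalemxAl -!scalemxAr !scalerA [c' * c]mulrC.
by rewrite scalerBr.
Qed.

Lemma diag_entry (d : 'rV[F]_n) i j : diag_mx d i j = d 0 i *+ (i == j).
Proof. by rewrite mxE. Qed.

Lemma deltaE i j k l : (delta_mx i j : M) k l = ((k == i) && (l == j))%:R.
Proof. by rewrite mxE. Qed.

Lemma lbr_diag_diag (d e : 'rV[F]_n) : lbr (diag_mx d) (diag_mx e) = 0.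
Proof.
apply/matrixP => i j; rewrite lbr_diag !mxE.
by case: (eqVneq i j) => [->|ij]; rewrite ?subrr ?mulr0 // mulr0n mul0r.
Qed.

Definition dd (t : 'I_n) : 'rV[F]_n := \row_u ((u == t)%:R * n%:R - 1).
Definition T t := phi (diag_mx (dd t)).

Lemma sum_dd t : \sum_u dd t 0 u = 0.
Proof.
rewrite (eq_bigr (fun u => (u == t)%:R * n%:R - 1)); last by move=> u _; rewrite mxE.
rewrite sumrB sumr_const card_ord (bigD1 t) //= eqxx mul1r big1 ?addr0 ?subrr //.
by move=> u /negPf ->; rewrite mul0r.
Qed.

Lemma T_in t : T t \in Hf.
Proof.
by rewrite mem_Hf /T tr_phi psiK mxtrace_diag sum_dd eqxx diag_is_diag.
Qed.

Lemma lbr_Hf x y : x \in Hf -> y \in Hf -> lbr x y = 0.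
Proof.
rewrite !mem_Hf => /andP[_ /diagE dx] /andP[_ /diagE dy].
by apply: psi_inj; rewrite psi_lbr dx dy lbr_diag_diag psi0.
Qed.

Definition alpha i j (h : M) := psi h j j - psi h i i.
Definition arow i j : 'rV[F]_(\dim Hf) := \row_k alpha i j (vbasis Hf)`_k.
Definition key i j : 'rV[F]_(\dim Hf) := if i == j then 0 else arow i j.

Lemma alpha_lin i j c x y : alpha i j (c *: x + y) = c * alpha i j x + alpha i j y.
Proof.
rewrite /alpha psiD psiZ !mxE mulrBr opprD addrACA.
by rewrite [RHS]addrC [in RHS]addrC.
Qed.

Lemma fval_arow i j h : h \in Hf -> fval Hf (arow i j) h = alpha i j h.
Proof. by apply: fval_rep; apply: alpha_lin. Qed.

Lemma alphaT i j w : alpha i j (T w) = ((j == w)%:R - (i == w)%:R) * n%:R.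
Proof.
rewrite /alpha /T psiK !mxE !eqxx !mulr1n mulrBl; rewrite opprB addrA.
by rewrite subrK.
Qed.

Lemma root_entry (a : 'rV[F]_(\dim Hf)) x i j :
  x \in rootsp Hf a -> psi x i j != 0 -> a = key i j.
Proof.
rewrite mem_rootsp => /andP[_ /forallP hx] nz.
have E1 h : h \in Hf -> fval Hf a h = alpha i j h.
  move=> hH; move: (hx h); rewrite hH /= => /eqP /(congr1 psi).
  rewrite psi_lbr psiZ; move: hH; rewrite mem_Hf => /andP[_ /diagE ->].
  move/matrixP => /(_ i j); rewrite lbr_diag_row scal_entry.
  rewrite mulrC => /mulIf -/(_ nz).
  by move=> <-.
rewrite /key; case: (eqVneq i j) => [eij|nij]; apply: fval_inj => h hH.
  by rewrite fval0 E1 // /alpha eij subrr.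
by rewrite E1 // fval_arow.
Qed.


Lemma tr_delta i j : \tr (delta_mx i j : M) = (i == j)%:R.
Proof.
rewrite /mxtrace (bigD1 i) //= mxE eqxx /= big1 ?addr0 //.
by move=> k /negPf ki; rewrite mxE ki.
Qed.

Lemma tr_E i j : \tr (E i j) = (i == j)%:R.
Proof. by rewrite /E tr_phi tr_delta. Qed.

Lemma alpha_opp i j h : alpha j i h = - alpha i j h.
Proof. by rewrite /alpha opprB. Qed.

Lemma arow_opp i j : arow j i = - arow i j.
Proof. by apply/rowP => k; rewrite !mxE alpha_opp. Qed.

Lemma E_in_root i j : i != j -> E i j \in rootsp Hf (arow i j).
Proof.
move=> nij; rewrite mem_rootsp mem_sl tr_E (negPf nij) eqxx /=.
apply/forallP => h; apply/implyP => hH; rewrite fval_arow //.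
apply/eqP; apply: psi_inj; rewrite psi_lbr psiZ psiE /alpha.
move: hH; rewrite mem_Hf => /andP[_ hd]; move: (psi h) (diagE hd) => z zE.
rewrite {1}zE; apply/matrixP => k l; rewrite lbr_diag_row scal_entry !mxE.
case: (eqVneq k i) => [->|ki]; case: (eqVneq l j) => [->|lj] //=;
  by rewrite ?mul0r ?mulr0 ?mul1r ?mulr1.
Qed.

Lemma Hf_sl : (Hf <= sl)%VS.
Proof. by apply/subvP => x; rewrite mem_Hf mem_sl => /andP[]. Qed.

Lemma root_sl a : (rootsp Hf a <= sl)%VS.
Proof. by apply/subvP => x; rewrite mem_rootsp => /andP[]. Qed.

Lemma Hf_root0 : (Hf <= rootsp Hf 0)%VS.
Proof.
apply/subvP => x xH; rewrite mem_rootsp (subvP Hf_sl) //=.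
apply/forallP => h; apply/implyP => hH.
by rewrite lbr_Hf // fval0 scale0r.
Qed.


Hypothesis nn : (n%:R : F) != 0.
Hypothesis n2 : (2%:R : F) != 0.
Hypothesis n3 : (3%:R : F) != 0.

Lemma two_eq : (2%:R : F) = 1 + 1. Proof. ring. Qed.
Lemma three_eq : (3%:R : F) = 1 + 1 + 1. Proof. ring. Qed.

Lemma bool1 (b c : bool) : (1 : F) = b%:R - c%:R -> b.
Proof.
case: b; case: c => //= /eqP; rewrite ?subrr ?sub0r ?subr0 ?oner_eq0 //.
by rewrite -subr_eq0 opprK -two_eq (negPf n2).
Qed.

Lemma boolm1 (b c : bool) : (-1 : F) = b%:R - c%:R -> c.
Proof.
move=> e; apply: (@bool1 c b); rewrite -opprB -e opprK //.
Qed.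

Lemma two_neq (b c : bool) : (2%:R : F) != b%:R - c%:R.
Proof.
case: b; case: c => //=; rewrite ?subrr ?sub0r ?subr0 ?two_eq.
- by rewrite -two_eq.
- by rewrite -subr_eq0 addrK oner_eq0.
- by rewrite -subr_eq0 opprK -three_eq.
- by rewrite -two_eq.
Qed.

Lemma arow_neq0 i j : i != j -> arow i j != 0.
Proof.
move=> nij; apply/eqP => e; have := fval_arow i j (T_in j).
rewrite e fval0 alphaT eqxx (negPf nij) subr0 mul1r => /eqP.
by rewrite eq_sym (negPf nn).
Qed.

Lemma arow_inj i j u v : i != j -> arow i j = arow u v -> (u == i) && (v == j).
Proof.
move=> nij e.
have e1 : alpha i j (T j) = alpha u v (T j) by rewrite -!fval_arow ?T_in // e.
have e2 : alpha i j (T i) = alpha u v (T i) by rewrite -!fval_arow ?T_in // e.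
rewrite !alphaT eqxx (negPf nij) in e1.
rewrite !alphaT eqxx [j == i]eq_sym (negPf nij) in e2.
move: e1 => /(mulIf nn); rewrite subr0 => /bool1 ->.
move: e2 => /(mulIf nn); rewrite sub0r => /boolm1 ->.
by [].
Qed.

Lemma key_vals i j w : exists b c : bool, fval Hf (key i j) (T w) = (b%:R - c%:R) * n%:R.
Proof.
rewrite /key; case: (eqVneq i j) => _.
  by exists false, false; rewrite fval0 subr0 mul0r.
by exists (j == w), (i == w); rewrite fval_arow ?T_in // alphaT.
Qed.

Lemma root_key a : is_root F n Hf a -> exists i j, a = key i j.
Proof.
rewrite /is_root -vpick0 => nz.
have hx := memv_pick (rootsp Hf a); set x := vpick _ in nz hx.
have : psi x != 0 by apply: contra nz => /eqP e; rewrite -(phiK x) e phi0.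
case: (boolP [exists i, exists j, psi x i j != 0]) => [/existsP[i /existsP[j nzij]] _|].
  by exists i, j; apply: root_entry hx nzij.
move/existsPn => h0 /eqP nz0; exfalso; apply: nz0; apply/matrixP => i j; rewrite [in RHS]mxE.
by move: (h0 i) => /existsPn /(_ j) /negPn /eqP.
Qed.

Lemma rootsp_arow i j : i != j -> (rootsp Hf (arow i j) <= <[E i j]>)%VS.
Proof.
move=> nij; apply/subvP => x hx; apply/vlineP; exists (psi x i j).
have hz : forall k l, (k != i) || (l != j) -> psi x k l = 0.
  move=> k l hkl; apply/eqP; apply/negPn/negP => nz.
  have := root_entry hx nz; rewrite /key; case: (eqVneq k l) => [_ e|nkl].
    by move: (arow_neq0 nij); rewrite e eqxx.
  move=> /(arow_inj nij) /andP[/eqP ki /eqP lj].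
  by move: hkl; rewrite ki lj !eqxx.
apply: psi_inj; rewrite psiZ psiE; apply/matrixP => k l; rewrite scal_entry deltaE.
case: (eqVneq k i) => [ki|ki]; case: (eqVneq l j) => [lj|lj].
- by rewrite ki lj mulr1.
- by rewrite /= mulr0 hz // lj orbT.
- by rewrite /= mulr0 hz // ki.
- by rewrite /= mulr0 hz // ki.
Qed.

Lemma lbrE i j : lbr (E i j) (E j i) = phi (delta_mx i i - delta_mx j j).
Proof.
apply: psi_inj; rewrite psi_lbr !psiE psiK /Defs.lbr !mul_delta_mx //.
Qed.

Lemma lbrE_neq0 i j : i != j -> lbr (E i j) (E j i) != 0.
Proof.
move=> nij; rewrite lbrE; apply/eqP => /(congr1 psi); rewrite psiK psi0.
move/matrixP => /(_ i i); rewrite !mxE !eqxx /= (negPf nij) /= subr0.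
by move/eqP; rewrite oner_eq0.
Qed.


Lemma sl_decomp : sl = (\sum_(a : 'rV[F]_(\dim Hf)) rootsp Hf a)%VS.
Proof.
apply/eqP; rewrite eqEsubv; apply/andP; split; last first.
  by apply/subv_sumP => a _; apply: root_sl.
apply/subvP => x; rewrite mem_sl => /eqP tx.
set y := psi x; set D := diag_mx (\row_k y k k).
have -> : x = phi (y - D) + phi D by rewrite -phiD subrK phiK.
apply: memvD.
  rewrite [y - D]matrix_sum_delta phi_sum; apply: rpred_sum => i _.
  rewrite phi_sum; apply: rpred_sum => j _; rewrite phiZ.
  case: (eqVneq i j) => [->|nij].
    by rewrite !mxE eqxx mulr1n subrr scale0r mem0v.
  apply: (subvP (sumv_sup (arow i j) _ (subvv _))) => //.
  by apply: memvZ; apply: E_in_root.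
apply: (subvP (sumv_sup 0 _ (subvv _))) => //.
apply: (subvP Hf_root0); rewrite mem_Hf psiK diag_is_diag andbT tr_phi.
rewrite mxtrace_diag; apply/eqP; transitivity (\tr y); last by rewrite tr_psi.
by rewrite /mxtrace; apply: eq_bigr => k _; rewrite mxE.
Qed.

Lemma root_direct : directv (\sum_(a : 'rV[F]_(\dim Hf)) rootsp Hf a)%VS.
Proof.
apply/directv_sum_independent => us hus s0 a _.
apply: psi_inj; rewrite psi0; apply/matrixP => i j; rewrite [in RHS]mxE.
apply/eqP; apply/negPn/negP => nz.
have ea := root_entry (hus a isT) nz.
have := congr1 (fun z => psi z i j) s0; rewrite /= psi0 psi_sum summxE (bigD1 a) //=.
rewrite big1 ?addr0; first by move=> e; move: nz; rewrite e mxE eqxx.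
move=> b nba; apply/eqP; apply/negPn/negP => nzb.
by move: nba; rewrite (root_entry (hus b isT) nzb) ea eqxx.
Qed.

Lemma brsp_dim i j : i != j ->
  \dim (brsp F n (rootsp Hf (arow i j)) (rootsp Hf (arow j i))) = 1%N.
Proof.
move=> nij.
have -> : brsp F n (rootsp Hf (arow i j)) (rootsp Hf (arow j i)) = <[lbr (E i j) (E j i)]>%VS.
  apply/eqP; rewrite eqEsubv; apply/andP; split.
    apply/span_subvP => z /mapP [[x y]]; rewrite mem_enum /= => /andP [hx hy] ->.
    move: (subvP (rootsp_arow nij) x hx) => /vlineP [c ->].
    rewrite eq_sym in nij.
    move: (subvP (rootsp_arow nij) y hy) => /vlineP [c' ->].
    by rewrite lbrZZ; apply: memvZ; apply: memv_line.
  rewrite -memvE; apply: memv_span; apply/mapP; exists (E i j, E j i) => //.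
  rewrite mem_enum; apply/andP; split; apply: E_in_root => //.
  by rewrite eq_sym.
by rewrite dim_vline lbrE_neq0.
Qed.

Lemma self_norm_Hf : self_normalizing F n Hf.
Proof.
move=> x; rewrite mem_sl mem_Hf => -> /= hn.
apply/is_diag_mxP => i j nij.
have := hn (T j) (T_in j); rewrite mem_Hf => /andP[_ /is_diag_mxP /(_ i j nij)].
rewrite psi_lbr /T psiK lbr_diag !mxE eqxx.
have -> : (i == j) = false by apply/negP => /eqP e; move: nij; rewrite e eqxx.
rewrite mul0r sub0r opprK mul1r subrK => /eqP.
by rewrite mulf_eq0 (negPf nn) orbF => /eqP.
Qed.

Lemma root_val a w : is_root F n Hf a -> exists b c : bool,
  fval Hf a (T w) = (b%:R - c%:R) * n%:R.
Proof. by case/root_key => i [j ->]; apply: key_vals. Qed.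

Lemma frame_classical : classical_cartan F n Hf.
Proof.
have ab : lie_abelian F n Hf by move=> x y; apply: lbr_Hf.
split=> //.
- split=> //.
  + split; first exact: Hf_sl.
    by move=> x y hx hy; rewrite ab // mem0v.
  + exists 1%N => /=; apply/eqP; rewrite -subv0; apply/span_subvP => z.
    by case/mapP => [[x y]]; rewrite mem_enum /= => /andP[hx hy] ->; rewrite ab // mem0v.
  + exact: self_norm_Hf.
- split; [exact: sl_decomp | exact: root_direct].
- move=> a ra na; case: (root_key ra) => i [j ea].
  move: ea na; rewrite /key; case: (eqVneq i j) => [_ -> |nij ->]; first by rewrite eqxx.
  by move=> _; rewrite -arow_opp brsp_dim.
- move=> l a b lc ra rb nb hk.
  have [i [j eb]] := root_key rb.
  move: eb nb; rewrite /key; case: (eqVneq i j) => [_ ->|nij eb _]; first by rewrite eqxx.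
  have [b1 [c1 ea]] := root_val j ra.
  have l5 : (4 <= l)%N.
    move: lc; rewrite inE => /andP [pl /eqP l0].
    have l2 : l != 2%N by apply/eqP => e; move: n2; rewrite -e l0 eqxx.
    have l3 : l != 3%N by apply/eqP => e; move: n3; rewrite -e l0 eqxx.
    have := prime_gt1 pl; move: l2 l3; clear; lia.
  pose k := (2 + c1 - b1)%N.
  have k1 : (1 <= k <= l.-1)%N by rewrite /k; move: (b1) (c1) l5 => [] [] /=; lia.
  have [b2 [c2 e2]] := root_val j (hk k k1).
  move: e2; rewrite fvalDZ ea eb fval_arow ?T_in // alphaT eqxx.
  rewrite (negPf nij) subr0 mul1r /k natrB; last by move: (b1) (c1) => [] [].
  rewrite natrD -mulrDl => /(mulIf nn).
  have -> : (b1%:R - c1%:R + (2%:R + c1%:R - b1%:R) : F) = 2%:R by ring.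
  by move/eqP; rewrite (negPf (two_neq b2 c2)).
Qed.


Lemma Hf_nondeg x : x \in Hf -> (forall h, h \in Hf -> \tr (x *m h) = 0) -> x = 0.
Proof.
move=> hx ho; move: (hx); rewrite mem_Hf => /andP[/eqP tx /diagE dx].
set r := \row_k psi x k k in dx.
have trr : \sum_u r 0 u = 0 by rewrite -mxtrace_diag -dx tr_psi.
have rw : forall w, r 0 w = 0.
  move=> w; have := ho (T w) (T_in w); rewrite -tr_psi psiM /T psiK dx mulmx_diag.
  rewrite mxtrace_diag (eq_bigr (fun u => r 0 u * (u == w)%:R * n%:R - r 0 u)).
    rewrite sumrB trr subr0 (bigD1 w) //= eqxx mulr1 big1 ?addr0.
      by move/eqP; rewrite mulf_eq0 (negPf nn) orbF => /eqP.
    by move=> u /negPf ->; rewrite mulr0 mul0r.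
  by move=> u _; rewrite !mxE mulrBr mulr1 mulrA.
rewrite -(phiK x) dx (_ : diag_mx r = 0) ?phi0 //.
by apply/matrixP => i j; rewrite diag_entry rw mul0rn [RHS]mxE.
Qed.

Lemma dim_Hf : \dim Hf = n.-1.
Proof.
have n0 : (0 < n)%N by rewrite lt0n; apply: contra nn => /eqP ->.
pose i0 : 'I_n := Ordinal n0.
pose X := [tuple E i i | i < n].
have fX : free X.
  apply/freeP => k hk i.
  have := congr1 (fun z => psi z i i) hk; rewrite /= psi0 psi_sum summxE (bigD1 i) //=.
  rewrite big1 ?addr0.
    by rewrite psiZ nth_mktuple psiE scal_entry deltaE !eqxx mulr1 mxE.
  by move=> j nji; rewrite nth_mktuple psiZ psiE scal_entry deltaE eq_sym (negPf nji) mulr0.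
have dX : \dim (span X) = n by rewrite (eqP fX) size_tuple.
have disj : (Hf :&: <[E i0 i0]> = 0)%VS.
  apply/eqP; rewrite -subv0; apply/subvP => z /memv_capP [zH /vlineP [c ez]].
  move: zH; rewrite ez mem_Hf mxtraceZ tr_E eqxx mulr1 => /andP[/eqP -> _].
  by rewrite scale0r mem0v.
have eq : (Hf + <[E i0 i0]> = span X)%VS.
  apply/eqP; rewrite eqEsubv; apply/andP; split.
    rewrite subv_add; apply/andP; split; last first.
      rewrite -memvE -(tnth_mktuple (fun i => E i i) i0); apply: memv_span.
      exact: mem_tnth.
    apply/subvP => x; rewrite mem_Hf => /andP[_ /diagE dx].
    rewrite -(phiK x) dx diag_mx_sum_delta phi_sum; apply: rpred_sum => i _.
    rewrite phiZ; apply: memvZ; rewrite -[phi _]/(E i i) -(tnth_mktuple (fun i => E i i) i).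
    by apply: memv_span; apply: mem_tnth.
  apply/span_subvP => v /tnthP [i ->]; rewrite tnth_mktuple.
  rewrite -[E i i](subrK (E i0 i0)); apply: memv_add; last exact: memv_line.
  rewrite mem_Hf raddfB /= !tr_E !eqxx subrr eqxx /= psiB !psiE.
  apply/is_diag_mxP => k l kl; rewrite !mxE.
  have lk : (l == k) = false by apply/negP => /eqP e; move: kl; rewrite e eqxx.
  case: (eqVneq k i) => [ki|_]; case: (eqVneq k i0) => [ki0|_] /=.
  - by rewrite -ki -ki0 lk subrr.
  - by rewrite -ki lk subrr.
  - by rewrite -ki0 lk subrr.
  - by rewrite subrr.
have := dimv_disjoint_sum disj; rewrite eq dX dim_vline.
have -> : E i0 i0 != 0.
  by apply/eqP => /(congr1 mxtrace); rewrite tr_E eqxx mxtrace0 => /eqP; rewrite oner_eq0.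
by move=> h; rewrite [in RHS]h addn1.
Qed.

End Frame.

Lemma frame_orth (F : finFieldType) (n : nat) (P Q P' Q' : 'M[F]_n) (k : F) :
  Q *m P = 1%:M -> Q' *m P' = 1%:M ->
  (forall s t, (Q *m P') s t * (Q' *m P) t s = k) ->
  forall x y, x \in Hf P Q -> y \in Hf P' Q' -> \tr (x *m y) = 0.
Proof.
move=> QP QP' hk x y; rewrite !mem_Hf // => /andP[/eqP tx /diagE dx] /andP[/eqP ty /diagE dy].
rewrite -(phiK QP x) -(phiK QP' y) dx dy /phi.
set r := \row_k0 psi P Q x k0 k0; set r' := \row_k0 psi P' Q' y k0 k0.
have tr0 : \sum_i r 0 i = 0 by rewrite -mxtrace_diag -dx tr_psi.
have tr0' : \sum_i r' 0 i = 0 by rewrite -mxtrace_diag -dy tr_psi.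
have -> : P *m diag_mx r *m Q *m (P' *m diag_mx r' *m Q') =
  P *m (diag_mx r *m (Q *m P') *m diag_mx r' *m Q') by rewrite !mulmxA.
rewrite mxtrace_mulC.
have -> : diag_mx r *m (Q *m P') *m diag_mx r' *m Q' *m P =
  diag_mx r *m (Q *m P') *m diag_mx r' *m (Q' *m P) by rewrite !mulmxA.
move: (Q *m P') (Q' *m P) hk => A B hk.
rewrite /mxtrace (eq_bigr (fun s => r 0 s * (\sum_t r' 0 t) * k)).
  by rewrite -!mulr_suml tr0 !mul0r.
move=> s _; rewrite mxE mulr_sumr mulr_suml; apply: eq_bigr => t _.
rewrite mul_mx_diag mul_diag_mx !mxE -(hk s t).
by rewrite -!mulrA; congr (_ * _); rewrite mulrC -!mulrA; congr (_ * _); rewrite mulrC.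
Qed.
Section Assembly.
Variables (F : finFieldType) (n : nat).
Local Notation M := 'M[F]_n.

Lemma dim_sl : (0 < n)%N -> \dim (sl F n) = (n * n).-1.
Proof.
move=> n0; pose i0 : 'I_n := Ordinal n0; pose D : M := delta_mx i0 i0.
have trD : \tr D = 1 by rewrite /D tr_delta eqxx.
have disj : (sl F n :&: <[D]> = 0)%VS.
  apply/eqP; rewrite -subv0; apply/subvP => z /memv_capP [zH /vlineP [c ez]].
  move: zH; rewrite ez mem_sl mxtraceZ trD mulr1 => /eqP ->.
  by rewrite scale0r mem0v.
have eq : (sl F n + <[D]> = fullv)%VS.
  apply/eqP; rewrite eqEsubv subvf /=; apply/subvP => x _.
  rewrite -[x](subrK (\tr x *: D)); apply: memv_add; last by apply: memvZ; apply: memv_line.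
  by rewrite mem_sl raddfB /= mxtraceZ trD mulr1 subrr.
have := dimv_disjoint_sum disj; rewrite eq dimvf dim_matrix dim_vline.
have -> : D != 0.
  by apply/eqP => /(congr1 mxtrace); rewrite trD mxtrace0 => /eqP; rewrite oner_eq0.
by move=> h; move: h; rewrite /nat_of_bool; lia.
Qed.


Lemma cod_from_frames (Pf Qf : 'I_n.+1 -> M) (k : F) :
  (n%:R : F) != 0 -> (2%:R : F) != 0 -> (3%:R : F) != 0 ->
  (forall i, Qf i *m Pf i = 1%:M) ->
  (forall i j, i != j -> forall s t, (Qf i *m Pf j) s t * (Qf j *m Pf i) t s = k) ->
  has_COD F n.
Proof.
move=> nn n2 n3 QP hk.
have n0 : (0 < n)%N by rewrite lt0n; apply: contra nn => /eqP ->.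
pose H i := Hf (Pf i) (Qf i).
have orth : forall i j, i != j -> forall x y, x \in H i -> y \in H j -> \tr (x *m y) = 0.
  by move=> i j ij; apply: frame_orth (QP i) (QP j) (hk i j ij).
have dx : directv (\sum_i H i).
  apply/directv_sum_independent => us hus s0 j _.
  apply: (Hf_nondeg (QP j) nn (hus j isT)) => h hh.
  have := congr1 (fun z => \tr (z *m h)) s0; rewrite /= mul0mx mxtrace0.
  rewrite mulmx_suml raddf_sum (bigD1 j) //= big1 ?addr0 // => i ij.
  by apply: (orth i j ij) => //; apply: hus.
exists H; split=> //.
- apply/eqP; rewrite eq_sym eqEdim; apply/andP; split.
    by apply/subv_sumP => i _; apply: Hf_sl.
  rewrite (directvP dx) /= dim_sl //.
  rewrite (eq_bigr (fun _ => n.-1)); last by move=> i _; apply: dim_Hf.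
  rewrite sum_nat_const card_ord; move: n0; clear; case: n => // m _ /=.
  by rewrite mulSn mulnS.
- by move=> i; apply: frame_classical.
- move=> i j ij x y hx hy; rewrite /killing (orth i j ij x y hx hy) mulr0 //.
Qed.

End Assembly.
Section MUB.
Variables (F K : finFieldType) (n : nat) (e : 'I_n -> K).
Hypothesis e_bij : bijective e.
Variable chi : K -> F.
Hypothesis chiD : forall x y, chi (x + y) = chi x * chi y.
Hypothesis chi0 : chi 0 = 1.
Variable x0 : K.
Hypothesis chi_nt : chi x0 != 1.
Hypothesis cardK : #|K| = n.
Hypothesis nn : (n%:R : F) != 0.
Variable f : K -> K -> F.
Hypothesis fnz : forall a y, f a y != 0.
Hypothesis fq : forall a y t, f a (y + t) = f a y * f a t * chi (a * y * t).

Lemma chiN x : chi (- x) * chi x = 1.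
Proof. by rewrite -chiD addNr chi0. Qed.

Lemma chi_neq0 x : chi x != 0.
Proof. by apply/eqP => h; move: (chiN x); rewrite h mulr0 => /eqP; rewrite eq_sym oner_eq0. Qed.

Lemma chiV x : chi (- x) = (chi x)^-1.
Proof. by apply: (mulIf (chi_neq0 x)); rewrite chiN mulVf ?chi_neq0. Qed.

Lemma sumE (G : K -> F) : \sum_(s : 'I_n) G (e s) = \sum_(y : K) G y.
Proof. by symmetry; apply: reindex; apply: onW_bij. Qed.

Lemma char_sum c : \sum_(y : K) chi (c * y) = if c == 0 then n%:R else 0.
Proof.
case: (eqVneq c 0) => [->|c0].
  by rewrite (eq_bigr (fun _ => 1)) ?sumr_const ?cardK // => y _; rewrite mul0r chi0.
set S := \sum_y _.
have eS : S = chi x0 * S.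
  rewrite /S mulr_sumr (reindex_inj (addrI (c^-1 * x0))) /=.
  apply: eq_bigr => y _; rewrite mulrDr mulrA mulfV // mul1r chiD //.
move/eqP: eS; rewrite -subr_eq0 -{1}[S]mul1r -mulrBl mulf_eq0 subr_eq0 eq_sym.
by rewrite (negPf chi_nt) /= => /eqP.
Qed.

Lemma fa0 a : f a 0 = 1.
Proof.
have := fq a 0 0; rewrite addr0 !mulr0 ?mul0r chi0 mulr1 => h.
by apply: (mulfI (fnz a 0)); rewrite mulr1 -h.
Qed.

Definition g a b y := f b y / f a y.

Lemma gq a b y t : g a b (y + t) = g a b y * g a b t * chi ((b - a) * y * t).
Proof.
rewrite /g !fq !mulrBl chiD chiV !invfM.
set A := f a y; set B := f a t; set C := f b y; set D := f b t.
set X := chi (b * y * t); set Y := chi (a * y * t).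
ring.
Qed.

Lemma g_neq0 a b y : g a b y != 0.
Proof. by rewrite /g mulf_eq0 invr_eq0 negb_or !fnz. Qed.

Lemma g0 a b : g a b 0 = 1.
Proof. by rewrite /g !fa0 divr1. Qed.

Lemma gsum a b d : a != b ->
  \sum_(y : K) \sum_(z : K) (g a b y * chi (d * y)) * ((g a b z)^-1 * chi (- (d * z))) = n%:R.
Proof.
move=> ab.
have cb : b - a != 0 by rewrite subr_eq0 eq_sym.
rewrite (eq_bigr (fun y => \sum_(t : K) (g a b t)^-1 * chi (- (d * t)) * chi ((- ((b - a) * t)) * y))).
  rewrite exchange_big /=.
  rewrite (eq_bigr (fun t => (g a b t)^-1 * chi (- (d * t)) * (if - ((b - a) * t) == 0 then n%:R else 0))).
    rewrite (bigD1 0) //= big1 ?addr0.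
      by rewrite !mulr0 !oppr0 eqxx g0 invr1 chi0 !mul1r.
    move=> t t0; rewrite oppr_eq0 mulf_eq0 (negPf cb) (negPf t0) /= mulr0 //.
  by move=> t _; rewrite -mulr_sumr char_sum.
move=> y _; rewrite (reindex_inj (addrI y)) /=; apply: eq_bigr => t _.
rewrite gq.
have gy := g_neq0 a b y; have gt := g_neq0 a b t.
move: (g a b y) (g a b t) gy gt => G H gy gt.
rewrite [chi ((b - a) * y * t)](_ : _ = (chi (- ((b - a) * y * t)))^-1); last by rewrite chiV invrK.
rewrite !invfM invrK.
transitivity ((G / G) * H^-1 * (chi (d * y) * chi (- ((b - a) * y * t)) * chi (- (d * (y + t))))).
  by ring.
rewrite mulfV // mul1r -!chiD -[RHS]mulrA -chiD; congr (_ * chi _); ring.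
Qed.


Definition PF a : 'M[F]_n := \matrix_(s, t) (f a (e s) * chi (e s * e t)).
Definition QF a : 'M[F]_n := \matrix_(s, t) (n%:R^-1 * (f a (e t))^-1 * chi (- (e s * e t))).

Lemma e_inj : injective e. Proof. exact: bij_inj. Qed.

Lemma QPF a : QF a *m PF a = 1%:M.
Proof.
apply/matrixP => x x'; rewrite !mxE.
rewrite (eq_bigr (fun s => n%:R^-1 * chi ((e x' - e x) * e s))).
  rewrite -mulr_sumr (sumE (fun y => chi ((e x' - e x) * y))) char_sum subr_eq0.
  rewrite (inj_eq e_inj) eq_sym; case: (x == x') => /=; rewrite ?mulr0 //.
  by rewrite mulVf.
move=> s _; rewrite !mxE.
transitivity (n%:R^-1 * ((f a (e s))^-1 * f a (e s)) * (chi (- (e x * e s)) * chi (e s * e x'))).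
  by ring.
by rewrite mulVf ?fnz // mulr1 -chiD; congr (_ * chi _); ring.
Qed.

Lemma cross_inf_a a s t : (1%:M *m PF a) s t * (QF a *m 1%:M) t s = n%:R^-1.
Proof.
rewrite mul1mx mulmx1 !mxE.
transitivity (n%:R^-1 * ((f a (e s))^-1 * f a (e s)) * (chi (- (e t * e s)) * chi (e s * e t))).
  by ring.
by rewrite mulVf ?fnz // mulr1 [e t * _]mulrC chiN mulr1.
Qed.

Lemma cross_a_inf a s t : (QF a *m 1%:M) s t * (1%:M *m PF a) t s = n%:R^-1.
Proof.
rewrite mul1mx mulmx1 !mxE.
transitivity (n%:R^-1 * ((f a (e t))^-1 * f a (e t)) * (chi (- (e s * e t)) * chi (e t * e s))).
  by ring.
by rewrite mulVf ?fnz // mulr1 [e t * _]mulrC chiN mulr1.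
Qed.

Lemma cross_ab a b x x' : a != b ->
  (QF a *m PF b) x x' * (QF b *m PF a) x' x = n%:R^-1.
Proof.
move=> ab; set d := e x' - e x.
have h1 : (QF a *m PF b) x x' = n%:R^-1 * \sum_(y : K) (g a b y * chi (d * y)).
  rewrite mxE -(sumE (fun y => g a b y * chi (d * y))) mulr_sumr.
  apply: eq_bigr => s _; rewrite !mxE /g.
  transitivity (n%:R^-1 * (f b (e s) / f a (e s)) * (chi (- (e x * e s)) * chi (e s * e x'))).
    by ring.
  by rewrite -chiD [RHS]mulrA; congr (_ * chi _); rewrite /d; ring.
have h2 : (QF b *m PF a) x' x = n%:R^-1 * \sum_(z : K) ((g a b z)^-1 * chi (- (d * z))).
  rewrite mxE -(sumE (fun z => (g a b z)^-1 * chi (- (d * z)))) mulr_sumr.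
  apply: eq_bigr => s _; rewrite !mxE /g invfM invrK.
  transitivity (n%:R^-1 * ((f b (e s))^-1 * f a (e s)) * (chi (- (e x' * e s)) * chi (e s * e x))).
    by ring.
  by rewrite -chiD [RHS]mulrA; congr (_ * chi _); rewrite /d; ring.
rewrite h1 h2.
transitivity (n%:R^-1 * n%:R^-1 * (\sum_(y : K) \sum_(z : K)
   (g a b y * chi (d * y)) * ((g a b z)^-1 * chi (- (d * z))))).
  transitivity (n%:R^-1 * n%:R^-1 * ((\sum_(y : K) (g a b y * chi (d * y))) *
     \sum_(z : K) ((g a b z)^-1 * chi (- (d * z))))); first by ring.
  by congr (_ * _); rewrite mulr_suml; apply: eq_bigr => y _; rewrite mulr_sumr.
by rewrite gsum // -mulrA mulVf ?mulr1.
Qed.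

Hypothesis n2 : (2%:R : F) != 0.
Hypothesis n3 : (3%:R : F) != 0.

Definition Pf (i : 'I_n.+1) := if unlift ord0 i is Some j then PF (e j) else 1%:M.
Definition Qf (i : 'I_n.+1) := if unlift ord0 i is Some j then QF (e j) else 1%:M.

Lemma mub_cod : has_COD F n.
Proof.
apply: (@cod_from_frames F n Pf Qf n%:R^-1) => //.
  by move=> i; rewrite /Pf /Qf; case: (unliftP ord0 i) => [j _|_]; rewrite ?QPF ?mul1mx.
move=> i j ij s t; rewrite /Pf /Qf.
case: (unliftP ord0 i) => [i' ei|ei]; case: (unliftP ord0 j) => [j' ej|ej] /=.
- apply: cross_ab; apply/eqP => /e_inj e'; by move: ij; rewrite ei ej e' eqxx.
- exact: cross_a_inf.
- exact: cross_inf_a.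
- by move: ij; rewrite ei ej eqxx.
Qed.

End MUB.

Lemma unit_order (F : finFieldType) N : (0 < N)%N -> (N %| #|F|.-1)%N ->
  exists w : F, w ^+ N = 1 /\ forall k, (0 < k < N)%N -> w ^+ k != 1.
Proof.
move=> N0 dN.
case/cyclicP: (field_unit_group_cyclic [set: {unit F}]%G) => g defg.
have og : #[g]%g = #|F|.-1 by rewrite /order -defg card_finField_unit.
have q0 : (0 < #|F|.-1)%N by rewrite -og order_gt0.
set k := (#|F|.-1 %/ N)%N.
have ek : #|F|.-1 = (k * N)%N by rewrite /k divnK.
have k0 : (0 < k)%N by move: q0; rewrite ek muln_gt0 => /andP[].
have ox : #[(g ^+ k)%g]%g = N.
  rewrite orderXdiv og ?ek ?dvdn_mulr // mulKn //.
exists (FinRing.uval (g ^+ k)%g); split.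
  by rewrite -FinRing.val_unitX -ox expg_order.
move=> j /andP[j0 jN]; rewrite -FinRing.val_unitX.
have : ~~ (#[(g ^+ k)%g]%g %| j)%N by rewrite ox; apply/negP => /(dvdn_leq j0); rewrite leqNgt jN.
rewrite order_dvdn; apply: contra => /eqP h; apply/eqP; apply: val_inj; rewrite h //.
Qed.
Lemma Fp_addv p (pp : prime p) (u v : 'F_p) : ((u + v)%R : 'F_p) = ((u + v) %% p)%N :> nat.
Proof. by have := val_Fp_nat pp (u + v)%N; rewrite natrD !natr_Zp. Qed.
Lemma Fp_mulv p (pp : prime p) (u v : 'F_p) : ((u * v)%R : 'F_p) = ((u * v) %% p)%N :> nat.
Proof. by have := val_Fp_nat pp (u * v)%N; rewrite natrM !natr_Zp. Qed.
Lemma Fp1v p (pp : prime p) : ((1%R : 'F_p) : nat) = 1%N.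
Proof. by have := val_Fp_nat pp 1; rewrite modn_small ?prime_gt1. Qed.
Lemma Fp0v p : ((0%R : 'F_p) : nat) = 0%N.
Proof. by []. Qed.
Section Char.
Variables (p : nat) (K0 : finFieldType) (pK : p \in [pchar K0]).
Local Notation K := (pPrimeCharType pK).
Variables (F : finFieldType) (w : F).
Hypothesis wp : w ^+ p = 1.
Hypothesis w1 : w != 1.

Lemma pprime : prime p. Proof. exact: pcharf_prime pK. Qed.
Definition bK := vbasis (fullv : {vspace K}).
Lemma dK0 : (0 < \dim (fullv : {vspace K}))%N.
Proof.
rewrite lt0n dimv_eq0; apply/eqP => h; have := memvf (1 : K).
by rewrite h memv0 oner_eq0.
Qed.
Definition i0K : 'I_(\dim (fullv : {vspace K})) := Ordinal dK0.
Definition cK j (x : K) : 'F_p := coord bK j x.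
Definition chiK (x : K) : F := w ^+ (cK i0K x).

Lemma cKD j x y : cK j (x + y) = cK j x + cK j y.
Proof. exact: linearD. Qed.
Lemma cKZ j (c : 'F_p) x : cK j (c *: x) = c * cK j x.
Proof. exact: linearZ. Qed.

Lemma chiKD x y : chiK (x + y) = chiK x * chiK y.
Proof. by rewrite /chiK cKD Fp_addv ?pprime // expr_mod // exprD. Qed.
Lemma chiK0 : chiK 0 = 1.
Proof. by rewrite /chiK /cK linear0 expr0. Qed.
Lemma chiK_nt : chiK (bK`_i0K) != 1.
Proof.
by rewrite /chiK /cK coord_free ?(basis_free (vbasisP _)) // eqxx Fp1v ?pprime // expr1.
Qed.
Lemma w_neq0 : w != 0.
Proof.
apply/eqP => h; move: wp; rewrite h expr0n; have := prime_gt0 pprime.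
by case: (p) => // q _ /eqP; rewrite eq_sym oner_eq0.
Qed.
Lemma chiK_neq0 x : chiK x != 0.
Proof. by rewrite /chiK expf_neq0 // w_neq0. Qed.
Lemma chiKZ (c : 'F_p) x : chiK (c *: x) = chiK x ^+ c.
Proof. by rewrite /chiK cKZ Fp_mulv ?pprime // expr_mod // mulnC exprM. Qed.


Lemma two_K : p != 2%N -> (2%:R : K) != 0.
Proof.
move=> p2; apply/negP => h.
have : (2%N \in [pchar K]) by rewrite inE /= h.
by rewrite (pcharf_eq pK) inE eq_sym (negPf p2).
Qed.

Lemma quad_odd : p != 2%N -> exists f : K -> K -> F,
  (forall a y, f a y != 0) /\ (forall a y t, f a (y + t) = f a y * f a t * chiK (a * y * t)).
Proof.
move=> p2; exists (fun a y => chiK (a * y * y / 2%:R)); split.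
  by move=> a y; apply: chiK_neq0.
move=> a y t; rewrite -!chiKD; congr chiK.
by field; apply: two_K.
Qed.

End Char.

Lemma prod2_split (R : comNzRingType) d (X Y : 'I_d -> 'I_d -> R) :
  \prod_(j < d) \prod_(k < d) (X j k * Y j k) = (\prod_(j < d) \prod_(k < d) X j k) * (\prod_(j < d) \prod_(k < d) Y j k).
Proof. by rewrite -big_split; apply: eq_bigr => j _; rewrite big_split. Qed.

Lemma prod_pairs (R : comNzRingType) d (G : 'I_d -> 'I_d -> R) :
  \prod_(j < d) \prod_(k < d) G j k =
  \prod_(j < d) \prod_(k < d) (if (j < k)%N then G j k * G k j else if j == k then G j j else 1).
Proof.
pose X (j k : 'I_d) := if (j < k)%N then G j k else 1.
pose Y (j k : 'I_d) := if (j < k)%N then G k j else 1.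
pose Z (j k : 'I_d) := if j == k then G j j else 1.
transitivity (\prod_(j < d) \prod_(k < d) (X j k * Y k j * Z j k)).
  apply: eq_bigr => j _; apply: eq_bigr => k _; rewrite /X /Y /Z.
  case: (ltngtP j k) => [jk|kj|ejk].
  - have -> : (j == k) = false by apply/eqP => e; move: jk; rewrite e ltnn.
    by rewrite !mulr1.
  - have -> : (j == k) = false by apply/eqP => e; move: kj; rewrite e ltnn.
    by rewrite mul1r mulr1.
  - by move/val_inj: ejk => ->; rewrite eqxx !mul1r.
transitivity (\prod_(j < d) \prod_(k < d) (X j k * Y j k * Z j k)); last first.
  apply: eq_bigr => j _; apply: eq_bigr => k _; rewrite /X /Y /Z.
  case: (ltngtP j k) => [jk|kj|ejk].
  - have -> : (j == k) = false by apply/eqP => e; move: jk; rewrite e ltnn.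
    by rewrite mulr1.
  - have -> : (j == k) = false by apply/eqP => e; move: kj; rewrite e ltnn.
    by rewrite !mul1r.
  - by move/val_inj: ejk => ->; rewrite eqxx !mul1r.
rewrite !prod2_split; congr (_ * _ * _).
by rewrite exchange_big.
Qed.

Section Two.
Variables (K0 : finFieldType) (pK : 2%N \in [pchar K0]).
Local Notation K := (pPrimeCharType pK).
Variables (F : finFieldType) (I : F).
Hypothesis hI : I * I = -1.
Let w : F := -1.
Let wp : w ^+ 2 = 1. Proof. by rewrite /w sqrrN expr1n. Qed.
Local Notation chi := (@chiK _ _ pK _ w).
Local Notation d := (\dim (fullv : {vspace K})).
Local Notation b := (bK pK).

Definition bit (j : 'I_d) (y : K) : bool := odd (cK j y).
Definition sg (x : bool) : F := (-1) ^+ x.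

Lemma chi_sg x : chi x = sg (odd (cK (i0K pK) x)).
Proof. by rewrite /chiK /sg signr_odd. Qed.

Lemma bitD j y t : bit j (y + t) = bit j y (+) bit j t.
Proof. by rewrite /bit cKD Fp_addv // modn2 oddb oddD. Qed.

Lemma chiZ2 (c : 'F_2) x : chi (c *: x) = if odd c then chi x else 1.
Proof.
rewrite chiKZ //; case: c => [[|[|k]] hk] //=; rewrite ?expr0 ?expr1 //.
Qed.

Lemma chi_expand a y t : chi (a * y * t) =
  \prod_(j < d) \prod_(k < d) (if bit j y && bit k t then chi (a * b`_j * b`_k) else 1).
Proof.
rewrite {1}(coord_vbasis (memvf y)) {1}(coord_vbasis (memvf t)).
rewrite [a * _]mulr_sumr mulr_suml (big_morph chi (chiKD wp) (chiK0 pK w)).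
apply: eq_bigr => j _; rewrite mulr_sumr (big_morph chi (chiKD wp) (chiK0 pK w)).
apply: eq_bigr => k _.
rewrite -[a * (_ *: _)]scalerAr -scalerAl -scalerAr scalerA chiZ2.
rewrite /bit /cK Fp_mulv // modn2 oddb oddM.
by [].
Qed.


Definition Ab (a : K) (j k : 'I_d) : bool := odd (cK (i0K pK) (a * b`_j * b`_k)).
Lemma E_sg (a : K) (j k : 'I_d) : chi (a * b`_j * b`_k) = sg (Ab a j k).
Proof. exact: chi_sg. Qed.
Lemma Ab_sym (a : K) (j k : 'I_d) : Ab a j k = Ab a k j.
Proof. by rewrite /Ab mulrAC. Qed.

Definition wt (a : K) (j k : 'I_d) (y : K) : F :=
  if (j < k)%N then sg (Ab a j k && bit j y && bit k y)
  else if j == k then (if Ab a j j && bit j y then I else 1) else 1.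
Definition fq2 (a y : K) := \prod_(j < d) \prod_(k < d) wt a j k y.

Lemma tw_lt (A y1 y2 t1 t2 : bool) :
  sg (A && (y1 (+) t1) && (y2 (+) t2)) = sg (A && y1 && y2) * sg (A && t1 && t2) *
   ((if y1 && t2 then sg A else 1) * (if y2 && t1 then sg A else 1)).
Proof.
by case: A; case: y1; case: y2; case: t1; case: t2;
  rewrite /sg /= ?expr0 ?expr1; ring.
Qed.

Lemma tw_eq (A y1 t1 : bool) :
  (if A && (y1 (+) t1) then I else 1) = (if A && y1 then I else 1) *
    (if A && t1 then I else 1) * (if y1 && t1 then sg A else 1).
Proof.
case: A; case: y1; case: t1; rewrite /sg /= ?expr0 ?expr1 ?mulr1 ?mul1r //.
by rewrite hI mulrNN mulr1.
Qed.

Lemma I_neq0 : I != 0.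
Proof.
by apply/eqP => h; move: hI; rewrite h mulr0 => /eqP; rewrite eq_sym oppr_eq0 oner_eq0.
Qed.

Lemma fq2_neq0 a y : fq2 a y != 0.
Proof.
apply: (big_ind (fun x => x != 0)); rewrite ?oner_eq0 //; first by move=> u v; apply: mulf_neq0.
move=> j _; apply: (big_ind (fun x => x != 0)); rewrite ?oner_eq0 //; first by move=> u v; apply: mulf_neq0.
move=> k _; rewrite /wt; case: (j < k)%N; first by rewrite /sg signr_eq0.
case: (j == k); last by rewrite oner_eq0.
by case: ifP => _; rewrite ?oner_eq0 ?I_neq0.
Qed.

Lemma fq2_q a y t : fq2 a (y + t) = fq2 a y * fq2 a t * chi (a * y * t).
Proof.
rewrite /fq2 chi_expand.
rewrite (prod_pairs (fun j k => if bit j y && bit k t then chi (a * b`_j * b`_k) else 1)).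
rewrite -!prod2_split.
apply: eq_bigr => j _; apply: eq_bigr => k _; rewrite /wt.
case: (boolP (j < k)%N) => jk /=.
  by rewrite !bitD !E_sg [Ab a k j]Ab_sym tw_lt.
case: (eqVneq j k) => [_|_] /=; last by rewrite !mulr1.
by rewrite !bitD E_sg tw_eq.
Qed.

Lemma quad_two : exists f : K -> K -> F,
  (forall a y, f a y != 0) /\ (forall a y t, f a (y + t) = f a y * f a t * chi (a * y * t)).
Proof. by exists fq2; split; [apply: fq2_neq0 | apply: fq2_q]. Qed.

End Two.
Theorem corollary2p3 (F : finFieldType) (p m : nat) :
  prime p -> (0 < m)%N ->
  2%N \notin [pchar F] -> 3%N \notin [pchar F] -> p \notin [pchar F] ->
  ((p == 2%N) && (#|F| %% 4 == 1)%N) || ((2 < p)%N && (p %| #|F|.-1)%N) ->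
  has_COD F (p ^ m).
Proof.
move=> pp m0 c2 c3 cp cond.
have n2 : (2%:R : F) != 0 by apply: contra c2 => h; rewrite inE /= h.
have n3 : (3%:R : F) != 0 by apply: contra c3 => h; rewrite inE /= h.
have nn : ((p ^ m)%N%:R : F) != 0.
  by rewrite natrX expf_neq0 //; apply: contra cp => h; rewrite inE pp h.
have [K0 pK cK0] := pPrimePowerField pp m0.
pose K := pPrimeCharType pK.
have cardK : #|K| = (p ^ m)%N by [].
pose e := fun s : 'I_(p ^ m) => (enum_val (cast_ord (esym cardK) s) : K).
have e_bij : bijective e.
  exists (fun y => cast_ord cardK (enum_rank y)) => s; rewrite /e.
    by rewrite enum_valK cast_ordKV.
  by rewrite cast_ordK enum_rankK.
have [w [[wp w1] [f [fnz fq]]]] : exists w : F, (w ^+ p = 1 /\ w != 1) /\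
    exists f : K -> K -> F, (forall a y, f a y != 0) /\
      (forall a y t, f a (y + t) = f a y * f a t * @chiK _ _ pK _ w (a * y * t)).
  case/orP: cond => [/andP[/eqP p2 q4] | /andP[p2 dp]].
    have dq : (4 %| #|F|.-1)%N.
      by rewrite [in X in (_ %| X)%N](divn_eq #|F| 4) (eqP q4) addn1 /= dvdn_mull.
    have [i [i4 ik]] := unit_order (isT : (0 < 4)%N) dq.
    have i2 : i * i = -1.
      have : (i ^+ 2) ^+ 2 = 1 by rewrite -exprM.
      move/eqP; rewrite sqrf_eq1 => /orP[/eqP h|/eqP h]; last by rewrite -expr2.
      by move: (ik 2%N isT); rewrite h eqxx.
    exists (-1); split.
      rewrite p2 sqrrN expr1n; split=> //.
      by apply/eqP => h; move: n2; rewrite -[2%:R]/(1 + 1 : F) -{1}h addNr eqxx.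
    subst p; exact: (quad_two pK i2).
  have [w [wp wk]] := unit_order (prime_gt0 pp) dp.
  have w1 : w != 1 by move: (wk 1%N); rewrite expr1; apply; rewrite prime_gt1.
  exists w; split => //.
  apply: (quad_odd pK wp).
  by rewrite neq_ltn p2 orbT.
apply: (mub_cod e_bij (chiKD wp) (chiK0 pK w) (chiK_nt pK w1) cardK nn fnz fq n2 n3).
Qed.
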